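(* Let $\mathcal{H}\neq0$ and $\mathcal{K}$ be Hilbert spaces, $(a_i)_{i\in I}$ an orthonormal basis of $\mathcal{H}$, and $S\in\mathcal{C}(\mathcal{H}\otimes\mathcal{K})$. Then $\exists_\mathcal{H}S=\mathcal{H}\otimes S^\mathcal{H}$. In particular $S^\mathcal{H}$ does not depend on the choice of orthonormal basis of $\mathcal{H}$.
   Context: $\mathcal{C}(\mathcal{H})$ is the orthomodular lattice of closed subspaces of a Hilbert space. $\langle T\rangle$ denotes the closed linear span of a set $T$. For closed subspaces $A\le\mathcal{H}$, $B\le\mathcal{K}$, $A\otimes B$ is the closed subspace of $\mathcal{H}\otimes\mathcal{K}$ generated by all $a\otimes b$. $\mathcal{H}\otimes\mathcal{C}(\mathcal{K})=\{\mathcal{H}\otimes B:B\in\mathcal{C}(\mathcal{K})\}$, a complete sub-ortholattice of $\mathcal{C}(\mathcal{H}\otimes\mathcal{K})$; $\exists_\mathcal{H}S$ is the smallest element of $\mathcal{H}\otimes\mathcal{C}(\mathcal{K})$ containing $S$. Each $v\in\mathcal{H}\otimes\mathcal{K}$ is uniquely $v=\sum_{i\in I}a_i\otimes v_i$ with $v_i\in\mathcal{K}$, and $S^\mathcal{H}=\langle v_i: v\in S,\ i\in I\rangle$. *)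

(* Defs.v *)
From HB Require Import structures.
From mathcomp Require Import all_boot all_order all_algebra.
From mathcomp Require Import finmap.
From mathcomp Require Import all_classical all_reals all_analysis.
From mathcomp Require Import complex.
Set Implicit Arguments. Unset Strict Implicit. Unset Printing Implicit Defensive.
Import Order.TTheory GRing.Theory Num.Theory.
Import numFieldNormedType.Exports.
Local Open Scope classical_set_scope.
Local Open Scope ring_scope.

Definition totally {I : choiceType} : set_system {fset I} :=
  filter_from setT (fun A => [set B | (A `<=` B)%fset]).

Definition partial_sum {I : choiceType} {V : zmodType}
  (x : I -> V) (A : {fset I}) : V := \sum_(i : A) x (val i).

(* [has_sum x v] : the net of finite partial sums of x converges to v,
   i.e. v = \sum_{i \in I} x i (unconditional sum). *)
Definition has_sum {I : choiceType} {K : numFieldType} {V : normedModType K}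
  (x : I -> V) (v : V) : Prop :=
  partial_sum x @ totally --> v.

Section Hilbert.
Variable R : realType.
Local Notation C := R[i].

(* A complete normed space H over C together with an inner product inducing
   its norm: this is a complex Hilbert space. *)
Definition is_inner_product (H : completeNormedModType C) (ip : H -> H -> C) :=
  [/\ (forall y, forall a x1 x2, ip (a *: x1 + x2) y = a * ip x1 y + ip x2 y),
      (forall x y, ip y x = (ip x y)^*)%C &
      (forall x, ip x x = `|x| ^+ 2)].

Definition closed_subspace {V : normedModType C} (M : set V) : Prop :=
  [/\ M 0, (forall x y, M x -> M y -> M (x + y)),
      (forall (a : C) x, M x -> M (a *: x)) & closed M].

Definition clspan {V : normedModType C} (T : set V) : set V :=
  \bigcap_(M in [set M : set V | closed_subspace M /\ T `<=` M]) M.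

Definition orthonormal_basis (H : completeNormedModType C) (ip : H -> H -> C)
  (I : choiceType) (a : I -> H) : Prop :=
  [/\ (forall i, ip (a i) (a i) = 1),
      (forall i j, i <> j -> ip (a i) (a j) = 0) &
      clspan (range a) = setT].

(* This determines H (x) K up to unitary isomorphism. *)
Definition is_tensor_product (H K T : completeNormedModType C)
  (ipH : H -> H -> C) (ipK : K -> K -> C) (ipT : T -> T -> C)
  (tens : H -> K -> T) : Prop :=
  [/\ is_inner_product ipT,
      (forall b (c : C) a1 a2, tens (c *: a1 + a2) b = c *: tens a1 b + tens a2 b),
      (forall a (c : C) b1 b2, tens a (c *: b1 + b2) = c *: tens a b1 + tens a b2),
      (forall a b c d, ipT (tens a b) (tens c d) = ipH a c * ipK b d) &
      clspan [set t | exists a b, t = tens a b] = setT].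

Section Tensor.
Variables (H K T : completeNormedModType C) (tens : H -> K -> T).

Definition tensS (A : set H) (B : set K) : set T :=
  clspan [set t | exists a b, [/\ A a, B b & t = tens a b]].

Definition in_HtensCK (E : set T) : Prop :=
  exists B : set K, closed_subspace B /\ E = tensS setT B.

(* exists_H S : smallest element of H (x) C(K) containing S, realized as the
   meet (intersection) of all elements of H (x) C(K) containing S
   (H (x) C(K) is a complete sub-ortholattice). *)
Definition existsH (S : set T) : set T :=
  \bigcap_(E in [set E | in_HtensCK E /\ S `<=` E]) E.

(* S^H w.r.t. the orthonormal basis a: writing v = sum_i a_i (x) v_i,
   S^H = < v_i : v in S, i in I >. *)
Definition coeffs (I : choiceType) (a : I -> H) (v : T) (w : I -> K) : Prop :=
  has_sum (fun i => tens (a i) (w i)) v.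

Definition supH (I : choiceType) (a : I -> H) (S : set T) : set K :=
  clspan [set x | exists v w i, [/\ S v, coeffs a v w & x = w i]].

End Tensor.
End Hilbert.

(* Main.v *)
Require Import Defs.
From HB Require Import structures.
From mathcomp Require Import all_boot all_order all_algebra.
From mathcomp Require Import finmap.
From mathcomp Require Import all_classical all_reals all_analysis.
From mathcomp Require Import complex.
From mathcomp Require Import ring.
Import Order.TTheory GRing.Theory Num.Theory.
Import numFieldNormedType.Exports.
Local Open Scope classical_set_scope.
Local Open Scope ring_scope.
HB.instance Definition _ (R : rcfType) := NormedModule.copy (complex R) (complex R)^o.
Set Implicit Arguments. Unset Strict Implicit. Unset Printing Implicit Defensive.

Section IP.
Variable R : realType.
Local Notation C := R[i].
Variables (V : completeNormedModType C) (ip : V -> V -> C).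
Hypothesis hV : is_inner_product ip.

Lemma ipDZl a x y z : ip (a *: x + y) z = a * ip x z + ip y z.
Proof. by case: hV. Qed.
Lemma ipC x y : ip y x = Num.conj (ip x y).
Proof. by case: hV. Qed.
Lemma ipnorm x : ip x x = `|x| ^+ 2.
Proof. by case: hV. Qed.

Lemma ipDl x y z : ip (x + y) z = ip x z + ip y z.
Proof. by rewrite -[x]scale1r ipDZl mul1r scale1r. Qed.
Lemma ip0l z : ip 0 z = 0.
Proof.
have := ipDl 0 0 z; rewrite addr0 => /eqP.
by rewrite -subr_eq0 opprD addrA subrr add0r oppr_eq0 => /eqP.
Qed.
Lemma ipZl a x z : ip (a *: x) z = a * ip x z.
Proof. by rewrite -[a *: x]addr0 ipDZl ip0l addr0. Qed.
Lemma ipNl x z : ip (- x) z = - ip x z.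
Proof. by rewrite -scaleN1r ipZl mulN1r. Qed.
Lemma ipBl x y z : ip (x - y) z = ip x z - ip y z.
Proof. by rewrite ipDl ipNl. Qed.
Lemma ipDr x y z : ip x (y + z) = ip x y + ip x z.
Proof. by rewrite ipC ipDl rmorphD (ipC y x) (ipC z x). Qed.
Lemma ip0r z : ip z 0 = 0.
Proof. by rewrite ipC ip0l rmorph0. Qed.
Lemma ipZr a x z : ip z (a *: x) = a^* * ip z x.
Proof. by rewrite ipC ipZl rmorphM (ipC x z). Qed.
Lemma ipNr x z : ip z (- x) = - ip z x.
Proof. by rewrite ipC ipNl rmorphN (ipC x z). Qed.
Lemma ipBr x y z : ip z (x - y) = ip z x - ip z y.
Proof. by rewrite ipDr ipNr. Qed.
Lemma ip_suml (J : Type) (r : seq J) (P : pred J) (F : J -> V) z :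
  ip (\sum_(j <- r | P j) F j) z = \sum_(j <- r | P j) ip (F j) z.
Proof. by apply: (big_morph (fun x => ip x z)); [exact: (fun x y => ipDl x y z) | exact: ip0l]. Qed.
Lemma ip_sumr (J : Type) (r : seq J) (P : pred J) (F : J -> V) z :
  ip z (\sum_(j <- r | P j) F j) = \sum_(j <- r | P j) ip z (F j).
Proof. by apply: (big_morph (fun x => ip z x)); [exact: (fun x y => ipDr z x y) | exact: ip0r]. Qed.

Lemma ip_eq0 x : ip x x = 0 -> x = 0.
Proof. by rewrite ipnorm => /eqP; rewrite expf_eq0 /= normr_eq0 => /eqP. Qed.

Lemma ip_nondeg x y : (forall k, ip x k = ip y k) -> x = y.
Proof.
move=> h; apply/eqP; rewrite -subr_eq0; apply/eqP/ip_eq0.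
by rewrite ipBl h subrr.
Qed.

Lemma pythag u w : ip u w = 0 -> `|u + w| ^+ 2 = `|u| ^+ 2 + `|w| ^+ 2.
Proof.
move=> h; rewrite -!ipnorm ipDl !ipDr h.
have h' : ip w u = 0 by rewrite ipC h rmorph0.
by rewrite h' addr0 add0r.
Qed.

Lemma sq_le (r s : C) : 0 <= r -> 0 <= s -> r ^+ 2 <= s ^+ 2 -> r <= s.
Proof. by move=> r0 s0; rewrite ler_pXn2r // nnegrE. Qed.

Lemma CS x y : `|ip x y| <= `|x| * `|y|.
Proof.
have [->|y0] := eqVneq y 0; first by rewrite ip0r !normr0 mulr0.
have yy0 : ip y y != 0 by apply/negP => /eqP /ip_eq0 /eqP; rewrite (negPf y0).
set t := ip x y / ip y y.
have ht : ip (x - t *: y) (t *: y) = 0.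
  by rewrite ipBl !ipZr ipZl /t -(mulrA (ip x y)) mulVf // mulr1 subrr.
have := pythag ht; rewrite subrK => e.
have : `|t *: y| <= `|x|.
  apply: sq_le => //; rewrite e lerDr; exact: exprn_ge0.
rewrite normrZ /t normrM normfV ipnorm normrX normr_id.
have ny0 : 0 < `|y| by rewrite normr_gt0.
have -> : `|ip x y| / `|y| ^+ 2 * `|y| = `|ip x y| / `|y|.
  by rewrite expr2 invfM !mulrA -(mulrA _ _ `|y|) mulVf ?gt_eqF // mulr1.
by rewrite ler_pdivrMr.
Qed.

End IP.

Section Topo.
Variable R : realType.
Local Notation C := R[i].

Lemma lip_cont (V W : normedModType C) (f : V -> W) (c : C) : 0 <= c ->
  (forall x y, `|f x - f y| <= c * `|x - y|) -> continuous f.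
Proof.
move=> c0 h x; apply/cvgrPdist_lt => e e0.
have c1 : 0 < c + 1 by rewrite ltr_wpDl.
have H : \forall t \near x, `|x - t| < e / (c + 1).
  by apply: (@cvgr_dist_lt _ _ _ (nbhs x) _ id x) => //; rewrite divr_gt0.
apply: filterS H => y /= hy.
apply: (le_lt_trans (h x y)).
apply: (le_lt_trans (y := (c + 1) * `|x - y|)); first by rewrite ler_wpM2r // lerDl.
by rewrite -ltr_pdivlMl // mulrC.
Qed.

Global Instance totally_filter (I : choiceType) : ProperFilter (@totally I).
Proof.
apply: filter_from_proper; first apply: filter_from_filter.
- by exists fset0%fset.
- move=> A B _ _; exists (A `|` B)%fset => // D /= hD; split.
    exact: fsubset_trans (fsubsetUl A B) hD.
  exact: fsubset_trans (fsubsetUr A B) hD.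
- by move=> A _; exists A => /=.
Qed.

Global Instance totally_nbhs_filter (I : choiceType) : ProperFilter (nbhs (@totally I)).
Proof. exact: totally_filter. Qed.

Global Instance totally_nbhs_filter' (I : choiceType) : Filter (nbhs (@totally I)).
Proof. exact: totally_filter. Qed.

Lemma near_mem (I : choiceType) (j : I) : \forall A \near (@totally I), j \in A.
Proof. by exists [fset j]%fset => // A /= /fsubsetP; apply; rewrite inE. Qed.

End Topo.

Section ClSpan.
Variable R : realType.
Local Notation C := R[i].
Variable V : normedModType C.

Lemma clspan_sub (X M : set V) : closed_subspace M -> X `<=` M -> clspan X `<=` M.
Proof. by move=> hM hX x; apply; split. Qed.
Lemma clspan_ext (X : set V) : X `<=` clspan X.
Proof. by move=> x Xx M [_ h]; exact: h. Qed.
Lemma clspan_cs (X : set V) : closed_subspace (clspan X).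
Proof.
split.
- by move=> M [[]].
- by move=> x y hx hy M hM; case: (hM) => [[_ hD _ _] _]; apply: hD; [exact: hx | exact: hy].
- by move=> a x hx M hM; case: (hM) => [[_ _ hZ _] _]; apply: hZ; exact: hx.
- by apply: closed_bigI => M [[]].
Qed.
Lemma clspan_mono (X Y : set V) : X `<=` Y -> clspan X `<=` clspan Y.
Proof.
move=> XY; apply: clspan_sub; first exact: clspan_cs.
by move=> x /XY; exact: clspan_ext.
Qed.
Lemma cs_sum (M : set V) : closed_subspace M ->
  forall (J : Type) (r : seq J) (P : pred J) (F : J -> V),
  (forall j, P j -> M (F j)) -> M (\sum_(j <- r | P j) F j).
Proof. by case=> h0 hD _ _ J r P F hF; apply: big_ind. Qed.
End ClSpan.

Section IP2.
Variable R : realType.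
Local Notation C := R[i].
Variables (V : completeNormedModType C) (ip : V -> V -> C).
Hypothesis hV : is_inner_product ip.

Lemma ipl_cont z : continuous (fun x => ip x z).
Proof.
apply: (@lip_cont _ _ _ (fun x => ip x z) `|z|) => // x y.
by rewrite -(ipBl hV) mulrC; exact: CS.
Qed.
End IP2.
Arguments ipl_cont {R V ip} hV z x.

Section Bessel.
Variable R : realType.
Local Notation C := R[i].
Variables (V : completeNormedModType C) (ip : V -> V -> C).
Hypothesis hV : is_inner_product ip.
Variables (I : choiceType) (Q : I -> V -> V).
Hypothesis Qlin : forall i c x y, Q i (c *: x + y) = c *: Q i x + Q i y.
Hypothesis Qorth : forall i j x y, i <> j -> ip (Q i x) (Q j y) = 0.
Hypothesis Qproj : forall j x y, ip x (Q j y) = ip (Q j x) (Q j y).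

Local Notation P A x := (partial_sum (fun i => Q i x) A).

Lemma Q0 i : Q i 0 = 0.
Proof.
have := Qlin i 1 0 0; rewrite scaler0 addr0 scale1r => /eqP.
by rewrite -subr_eq0 opprD addrA subrr add0r oppr_eq0 => /eqP.
Qed.
Lemma PZD A c x y : P A (c *: x + y) = c *: P A x + P A y.
Proof.
rewrite /partial_sum; under eq_bigr do rewrite Qlin.
by rewrite big_split /= -scaler_sumr.
Qed.
Lemma P0 A : P A 0 = 0.
Proof. by rewrite /partial_sum big1 // => i _; rewrite Q0. Qed.
Lemma PD A x y : P A (x + y) = P A x + P A y.
Proof. by have := PZD A 1 x y; rewrite !scale1r. Qed.
Lemma PZ A c x : P A (c *: x) = c *: P A x.
Proof. by rewrite -[c *: x]addr0 PZD P0 addr0. Qed.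
Lemma PB A x y : P A (x - y) = P A x - P A y.
Proof. by rewrite PD -scaleN1r PZ scaleN1r. Qed.

Lemma P_ip A x : ip (x - P A x) (P A x) = 0.
Proof.
rewrite (ipBl hV) /partial_sum (ip_sumr hV) (ip_suml hV).
under [X in _ - X]eq_bigr => j _.
  rewrite (ip_sumr hV) (bigD1 j) //= big1 ?addr0; last first.
    move=> i hij; rewrite (ipC hV) Qorth ?rmorph0 //.
    by move/val_inj => e; rewrite e eqxx in hij.
  rewrite -Qproj; over.
by rewrite /= subrr.
Qed.

Lemma P_bound A x : `|P A x| <= `|x|.
Proof.
have := pythag hV (P_ip A x); rewrite subrK => e.
by apply: sq_le => //; rewrite e lerDr exprn_ge0.
Qed.

Definition Gset := [set x | has_sum (fun i => Q i x) x].

Lemma G_cs : closed_subspace Gset.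
Proof.
split.
- rewrite /Gset /has_sum /=.
  have -> : partial_sum (fun i => Q i 0) = fun _ => 0.
    by apply: funext => A; rewrite P0.
  exact: cvg_cst.
- move=> x y hx hy; rewrite /Gset /has_sum /=.
  have -> : partial_sum (fun i => Q i (x + y)) =
      (partial_sum (fun i => Q i x)) + partial_sum (fun i => Q i y).
    by apply: funext => A; rewrite PD.
  exact: cvgD.
- move=> a x hx; rewrite /Gset /has_sum /=.
  have -> : partial_sum (fun i => Q i (a *: x)) = a \*: partial_sum (fun i => Q i x).
    by apply: funext => A; rewrite PZ.
  exact: cvgZr.
- rewrite closure_id; apply/seteqP; split; first exact: subset_closure.
  move=> x hx; rewrite /Gset /has_sum /=; apply/cvgrPdist_lt => e e0.
  have e3 : 0 < e / 3 by rewrite divr_gt0.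
  have [g [Gg xg]] := hx _ (nbhsx_ballx x _ e3).
  move: xg; rewrite -ball_normE /= => xg.
  have H := @cvgr_dist_lt _ _ _ (@totally I) (totally_filter I) _ _ Gg _ e3.
  apply: filterS H => A hA.
  have -> : x - P A x = (x - g) + (g - P A g) + P A (g - x).
    by rewrite PB; rewrite !addrA subrK subrK.
  apply: (le_lt_trans (ler_normD _ _)).
  apply: (le_lt_trans (y := e / 3 + e / 3 + `|x - g|)).
    apply: lerD; last by rewrite distrC; exact: P_bound.
    apply: (le_trans (ler_normD _ _)).
    by apply: lerD; apply: ltW.
  apply: (lt_le_trans (y := e/3 + e/3 + e/3)); first by rewrite ltrD2l.
  have -> : e / 3 + e / 3 + e / 3 = e by field.
  by [].
Qed.

End Bessel.

Lemma sq_le2 (R : realType) (r s : R[i]) : 0 <= r -> 0 <= s -> r ^+ 2 <= s * r -> r <= s.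
Proof.
move=> r0 s0; have [->|rn0] := eqVneq r 0; first by [].
have rp : 0 < r by rewrite lt0r rn0.
by rewrite expr2 ler_pM2r.
Qed.

Lemma sq_eq (R : realType) (r s : R[i]) : 0 <= r -> 0 <= s -> r ^+ 2 = s ^+ 2 -> r = s.
Proof.
move=> r0 s0 e; apply/le_anti/andP; split; apply: sq_le => //; by rewrite e.
Qed.

Section Main.
Variable R : realType.
Local Notation C := R[i].
Variables (H K T : completeNormedModType C)
  (ipH : H -> H -> C) (ipK : K -> K -> C) (ipT : T -> T -> C)
  (tens : H -> K -> T).
Hypotheses (hH : is_inner_product ipH) (hK : is_inner_product ipK)
  (hT : is_tensor_product ipH ipK ipT tens).
Variables (I : choiceType) (a : I -> H).
Hypothesis ha : orthonormal_basis ipH a.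

Lemma hTip : is_inner_product ipT. Proof. by case: hT. Qed.
Lemma tensDZl b c x y : tens (c *: x + y) b = c *: tens x b + tens y b.
Proof. by case: hT => _ h _ _ _; apply: h. Qed.
Lemma tensDZr x c b d : tens x (c *: b + d) = c *: tens x b + tens x d.
Proof. by case: hT => _ _ h _ _; apply: h. Qed.
Lemma tens_ip x b y d : ipT (tens x b) (tens y d) = ipH x y * ipK b d.
Proof. by case: hT => _ _ _ h _; apply: h. Qed.

Lemma tens0l b : tens 0 b = 0.
Proof.
have := tensDZl b 1 0 0; rewrite scaler0 addr0 scale1r => /eqP.
by rewrite -subr_eq0 opprD addrA subrr add0r oppr_eq0 => /eqP.
Qed.
Lemma tens0r x : tens x 0 = 0.
Proof.
have := tensDZr x 1 0 0; rewrite scaler0 addr0 scale1r => /eqP.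
by rewrite -subr_eq0 opprD addrA subrr add0r oppr_eq0 => /eqP.
Qed.
Lemma tensDl b x y : tens (x + y) b = tens x b + tens y b.
Proof. by have := tensDZl b 1 x y; rewrite !scale1r. Qed.
Lemma tensZl b c x : tens (c *: x) b = c *: tens x b.
Proof. by have := tensDZl b c x 0; rewrite !addr0 tens0l addr0. Qed.
Lemma tensZr x c b : tens x (c *: b) = c *: tens x b.
Proof. by have := tensDZr x c b 0; rewrite !addr0 tens0r addr0. Qed.
Lemma tensBl b x y : tens (x - y) b = tens x b - tens y b.
Proof. by rewrite tensDl -scaleN1r tensZl scaleN1r. Qed.
Lemma tens_suml (J : Type) (r : seq J) (P : pred J) (F : J -> H) b :
  tens (\sum_(j <- r | P j) F j) b = \sum_(j <- r | P j) tens (F j) b.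
Proof. by apply: (big_morph (fun x => tens x b)); [exact: (fun x y => tensDl b x y) | exact: tens0l]. Qed.

Lemma a_nrm i : ipH (a i) (a i) = 1. Proof. by case: ha. Qed.
Lemma a_orth i j : i <> j -> ipH (a i) (a j) = 0. Proof. by case: ha => _ h _; apply: h. Qed.
Lemma a_span : clspan (range a) = setT. Proof. by case: ha. Qed.

Lemma norm_a i : `|a i| = 1.
Proof. by apply: sq_eq => //; rewrite -(ipnorm hH) a_nrm expr1n. Qed.

Lemma tens_norm x b : `|tens x b| = `|x| * `|b|.
Proof.
apply: sq_eq => //.
by rewrite -(ipnorm hTip) tens_ip (ipnorm hH) (ipnorm hK) exprMn.
Qed.

Definition QH i h := ipH h (a i) *: a i.

Lemma QH_lin i c x y : QH i (c *: x + y) = c *: QH i x + QH i y.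
Proof. by rewrite /QH (ipDZl hH) scalerDl scalerA. Qed.
Lemma QH_orth i j x y : i <> j -> ipH (QH i x) (QH j y) = 0.
Proof. by move=> ij; rewrite /QH (ipZl hH) (ipZr hH) a_orth // !mulr0. Qed.
Lemma QH_proj j x y : ipH x (QH j y) = ipH (QH j x) (QH j y).
Proof. by rewrite /QH (ipZl hH) !(ipZr hH) a_nrm mulr1 mulrC. Qed.

Lemma H_exp h : has_sum (fun i => QH i h) h.
Proof.
have hG := G_cs hH QH_lin QH_orth QH_proj.
suff : clspan (range a) `<=` Gset QH by rewrite a_span => /(_ h Logic.I).
apply: clspan_sub => // _ [j _ <-]; rewrite /Gset /has_sum /=.
apply: cvg_near_cst; apply: filterS (near_mem j) => A hjA.
rewrite /partial_sum (bigD1 [` hjA]%fset) //= big1 ?addr0.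
  by rewrite /QH a_nrm scale1r.
move=> i hi; rewrite /QH a_orth ?scale0r //.
move=> e; suff : i = [` hjA]%fset by move/eqP; rewrite (negPf hi).
by apply: val_inj => /=; rewrite e.
Qed.

Lemma H_zero h : (forall i, ipH h (a i) = 0) -> h = 0.
Proof.
move=> h0; have := @H_exp h; rewrite /has_sum.
have -> : partial_sum (fun i => QH i h) = fun _ => 0.
  apply: funext => A; rewrite /partial_sum big1 // => i _.
  by rewrite /QH h0 scale0r.
move=> hc; exact: (cvg_unique (@norm_hausdorff _ H) hc (cvg_cst (0 : H))).
Qed.


Definition coefset i (t : T) := [set y : K | forall k, ipK y k = ipT t (tens (a i) k)].
Definition pi i t := xget 0 (coefset i t).
Definition Dset i := [set t | exists y, coefset i t y].

Lemma pi_specD i t : Dset i t -> coefset i t (pi i t).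
Proof. by move=> [y hy]; rewrite /pi; case: xgetP => // /(_ y). Qed.

Lemma rep_bound i t1 t2 y1 y2 : coefset i t1 y1 -> coefset i t2 y2 ->
  `|y1 - y2| <= `|t1 - t2|.
Proof.
move=> h1 h2.
have e : ipK (y1 - y2) (y1 - y2) = ipT (t1 - t2) (tens (a i) (y1 - y2)).
  by rewrite (ipBl hK) h1 h2 (ipBl hTip).
apply: sq_le2 => //.
rewrite -(ipnorm hK) -[X in X <= _]ger0_norm; last by rewrite (ipnorm hK) exprn_ge0.
rewrite e; apply: (le_trans (CS hTip _ _)).
by rewrite tens_norm norm_a mul1r.
Qed.

Lemma D_cs i : closed_subspace (Dset i).
Proof.
split.
- by exists 0 => k; rewrite (ip0l hK) (ip0l hTip).
- move=> x y [y1 h1] [y2 h2]; exists (y1 + y2) => k.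
  by rewrite (ipDl hK) (ipDl hTip) h1 h2.
- move=> c x [y1 h1]; exists (c *: y1) => k.
  by rewrite (ipZl hK) (ipZl hTip) h1.
- rewrite closure_id; apply/seteqP; split; first exact: subset_closure.
  move=> u hu.
  pose F := within (Dset i) (nbhs u).
  have FF : ProperFilter F by apply: within_nbhs_proper.
  have cF : cauchy (pi i @ F).
    apply/cauchyP => e e0.
    have e2 : 0 < e / 2 by rewrite divr_gt0.
    have [u0 [Du0 bu0]] := hu _ (nbhsx_ballx u _ e2).
    exists (pi i u0).
    rewrite /F /within /=.
    apply: filterS (nbhsx_ballx u _ e2) => t but Dt.
    rewrite -ball_normE /=.
    apply: (le_lt_trans (rep_bound (pi_specD Du0) (pi_specD Dt))).
    move: bu0 but; rewrite -!ball_normE /= => bu0 but.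
    have -> : u0 - t = (u0 - u) + (u - t) by rewrite addrA subrK.
    apply: (le_lt_trans (ler_normD _ _)).
    have -> : e = e / 2 + e / 2 by field.
    by apply: ltrD => //; rewrite distrC.
  have PF : ProperFilter (pi i @ F) by exact: fmap_proper_filter.
  have hy : pi i @ F --> lim (pi i @ F) by apply: cauchy_cvg.
  set y := lim (pi i @ F) in hy.
  exists y => k.
  have c1 : (fun t => ipK (pi i t) k) @ F --> ipK y k.
    exact: (continuous_cvg _ (ipl_cont hK k _) hy).
  have c2 : (fun t => ipT t (tens (a i) k)) @ F --> ipT u (tens (a i) k).
    apply: (continuous_cvg _ (ipl_cont hTip (tens (a i) k) _)).
    exact: cvg_within.
  have e3 : {near F, (fun t => ipT t (tens (a i) k)) =1 (fun t => ipK (pi i t) k)}.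
    rewrite /F /within /=; apply: (@filterE _ (nbhs u) _) => t Dt.
    by rewrite (pi_specD Dt).
  pose proof (near_eq_cvg e3) as c3.
  have c4 := cvg_trans c3 c2.
  exact: (cvg_unique (@norm_hausdorff _ C) c1 c4).
Qed.

Lemma pi_spec i t k : ipK (pi i t) k = ipT t (tens (a i) k).
Proof.
suff : Dset i t by move/pi_specD.
suff : clspan [set t | exists x b, t = tens x b] `<=` Dset i.
  by case: hT => _ _ _ _ ->; apply.
apply: clspan_sub; first exact: D_cs.
move=> _ [x [b ->]]; exists (ipH x (a i) *: b) => k'.
by rewrite (ipZl hK) tens_ip.
Qed.

Lemma pi_lin i c t s : pi i (c *: t + s) = c *: pi i t + pi i s.
Proof.
apply: (ip_nondeg hK) => k.
by rewrite pi_spec (ipDZl hTip) (ipDZl hK) !pi_spec.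
Qed.
Lemma pi_tens i x b : pi i (tens x b) = ipH x (a i) *: b.
Proof.
apply: (ip_nondeg hK) => k.
by rewrite pi_spec (ipZl hK) tens_ip.
Qed.
Lemma pi_lip i t s : `|pi i t - pi i s| <= `|t - s|.
Proof. by apply: rep_bound => k; rewrite pi_spec. Qed.
Lemma pi_cont i : continuous (pi i).
Proof. by apply: (@lip_cont _ _ _ (pi i) 1) => // x y; rewrite mul1r pi_lip. Qed.
Lemma pi0 i : pi i 0 = 0.
Proof. by apply: (ip_nondeg hK) => k; rewrite pi_spec (ip0l hK) (ip0l hTip). Qed.

Definition QT i t := tens (a i) (pi i t).
Lemma QT_lin i c x y : QT i (c *: x + y) = c *: QT i x + QT i y.
Proof. by rewrite /QT pi_lin tensDZr. Qed.
Lemma QT_orth i j x y : i <> j -> ipT (QT i x) (QT j y) = 0.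
Proof. by move=> ij; rewrite /QT tens_ip a_orth // mul0r. Qed.
Lemma QT_proj j x y : ipT x (QT j y) = ipT (QT j x) (QT j y).
Proof.
rewrite /QT tens_ip a_nrm mul1r pi_spec.
by [].
Qed.
Lemma tens_contl b : continuous (fun x => tens x b).
Proof.
apply: (@lip_cont _ _ _ (fun x => tens x b) `|b|) => // x y.
by rewrite -tensBl tens_norm mulrC.
Qed.

Lemma T_exp t : has_sum (fun i => QT i t) t.
Proof.
have hG := G_cs hTip QT_lin QT_orth QT_proj.
suff : clspan [set t | exists x b, t = tens x b] `<=` Gset QT.
  by case: hT => _ _ _ _ ->; apply.
apply: clspan_sub => // _ [x [b ->]]; rewrite /Gset /has_sum /=.
have -> : partial_sum (fun i => QT i (tens x b)) =
    (fun x => tens x b) \o partial_sum (fun i => QH i x).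
  apply: funext => A /=; rewrite /partial_sum tens_suml.
  by apply: eq_bigr => i _; rewrite /QT /QH pi_tens tensZr tensZl.
exact: (continuous_cvg _ (@tens_contl b x) (@H_exp x)).
Qed.

Lemma coef_uniq v w : coeffs tens a v w -> forall i, w i = pi i v.
Proof.
move=> hv i; apply: (ip_nondeg hK) => k; rewrite pi_spec.
pose proof (continuous_cvg _ (ipl_cont hTip (tens (a i) k) v) hv) as c1.
have c2 : ((fun s => ipT s (tens (a i) k)) \o partial_sum (fun j => tens (a j) (w j)))
    @ totally --> ipK (w i) k.
  apply: cvg_near_cst; apply: filterS (near_mem i) => A hiA /=.
  rewrite /partial_sum (ip_suml hTip) (bigD1 [` hiA]%fset) //= big1 ?addr0.
    by rewrite tens_ip a_nrm mul1r.
  move=> j hj; rewrite tens_ip a_orth ?mul0r //.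
  move=> e; suff : j = [` hiA]%fset by move/eqP; rewrite (negPf hj).
  by apply: val_inj => /=; rewrite e.
exact: (cvg_unique (@norm_hausdorff _ C) c2 c1).
Qed.

Lemma piD i x y : pi i (x + y) = pi i x + pi i y.
Proof. by have := pi_lin i 1 x y; rewrite !scale1r. Qed.
Lemma piZ i c x : pi i (c *: x) = c *: pi i x.
Proof. by have := pi_lin i c x 0; rewrite !addr0 pi0 addr0. Qed.

Lemma tensS_gen (B : set K) x b : B b -> tensS tens setT B (tens x b).
Proof. by move=> Bb; apply: clspan_ext; exists x, b; split. Qed.

Lemma pi_in (B : set K) : closed_subspace B ->
  forall v, tensS tens setT B v -> forall i, B (pi i v).
Proof.
move=> hB v hv i.
have hM : closed_subspace [set t | B (pi i t)].
  case: hB => h0 hD hZ hc; split.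
  - by rewrite /= pi0.
  - by move=> x y /= hx hy; rewrite piD; apply: hD.
  - by move=> c x /= hx; rewrite piZ; apply: hZ.
  - exact: ((continuous_closedP (pi i)).1 (@pi_cont i) B hc).
apply: (clspan_sub hM _ hv) => _ [x [b [_ Bb ->]]] /=.
by rewrite pi_tens; case: hB => _ _ hZ _; apply: hZ.
Qed.

Lemma exp_in (B : set K) : closed_subspace B ->
  forall v, (forall i, B (pi i v)) -> tensS tens setT B v.
Proof.
move=> hB v hv.
have hc : closed (tensS tens setT B) by case: (clspan_cs [set t | exists a0 b,
  [/\ [set: H] a0, B b & t = tens a0 b]]).
apply: (closed_cvg _ hc _ _ (@T_exp v)).
apply: filterE => A; apply: cs_sum; first exact: clspan_cs.
by move=> j _; apply: tensS_gen.
Qed.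

Lemma mainA (S : set T) : existsH tens S = tensS tens setT (supH tens a S).
Proof.
set B := supH tens a S.
have hB : closed_subspace B by apply: clspan_cs.
apply/seteqP; split.
- move=> x hx; apply: hx; split; first by exists B.
  move=> v Sv; apply: exp_in => // i; apply: clspan_ext.
  by exists v, (fun j => pi j v), i; split => //; exact: (@T_exp v).
- move=> x hx E [[B' [hB' ->]] SE].
  have BB' : B `<=` B'.
    apply: clspan_sub => // _ [v [w [i [Sv hw ->]]]].
    by rewrite (coef_uniq hw i); apply: pi_in => //; exact: SE.
  apply: (clspan_mono _ hx) => _ [x0 [b [_ Bb ->]]].
  by exists x0, b; split => //; exact: BB'.
Qed.

Lemma inj_tensS (Hnz : exists x : H, x <> 0) (B1 B2 : set K) :
  closed_subspace B1 -> closed_subspace B2 ->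
  tensS tens setT B1 `<=` tensS tens setT B2 -> B1 `<=` B2.
Proof.
move=> h1 h2 sub b Bb; case: Hnz => h0 nz.
have [i hi] : exists i, ipH h0 (a i) != 0.
  case: (pselect (exists i, ipH h0 (a i) != 0)) => // hn; exfalso; apply: nz.
  apply: H_zero => i; apply/eqP; apply: contrapT => hi; apply: hn.
  by exists i; apply/negP.
have := pi_in h2 (sub _ (@tensS_gen B1 h0 b Bb)) i; rewrite pi_tens => Bc.
have -> : b = (ipH h0 (a i))^-1 *: (ipH h0 (a i) *: b) by rewrite scalerA mulVf // scale1r.
by case: h2 => _ _ hZ _; apply: hZ.
Qed.

End Main.

Theorem mainTheorem11 (R : realType)
  (H K T : completeNormedModType R[i])
  (ipH : H -> H -> R[i]) (ipK : K -> K -> R[i]) (ipT : T -> T -> R[i])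
  (tens : H -> K -> T)
  (hH : is_inner_product ipH) (hK : is_inner_product ipK)
  (hT : is_tensor_product ipH ipK ipT tens)
  (H_nonzero : exists x : H, x <> 0)
  (I : choiceType) (a : I -> H) (ha : orthonormal_basis ipH a)
  (S : set T) (hS : closed_subspace S) :
  existsH tens S = tensS tens setT (supH tens a S) /\
  (forall (J : choiceType) (a' : J -> H), orthonormal_basis ipH a' ->
     supH tens a' S = supH tens a S).
Proof.
split; first exact: (mainA hH hK hT ha S).
move=> J a' ha'.
have e1 := mainA hH hK hT ha S.
have e2 := mainA hH hK hT ha' S.
have c1 : closed_subspace (supH tens a S) by apply: clspan_cs.
have c2 : closed_subspace (supH tens a' S) by apply: clspan_cs.
apply/seteqP; split; apply: (inj_tensS hH hK hT ha H_nonzero) => //.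
- by rewrite -e1 -e2.
- by rewrite -e1 -e2.
Qed.
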